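(* In the setting below, $C_2^\perp\subseteq C_1$, $\dim C_1-\dim C_2^\perp=k-m+s$, and every vector in $(C_1\setminus C_2^\perp)\cup(C_2\setminus C_1^\perp)$ has Hamming weight at least $\min(q-k,m)-s+1$. Consequently $\mathrm{CSS}(C_1,C_2)$ is a quantum CSS code over $\mathbb F_q$ with length $q-s$, dimension $k-m+s$ and distance at least $\min(q-k,m)-s+1$.
   Context: Let $q=2^l$ ($l\ge2$) and $\mathbb F_q$ the field with $q$ elements. Fix integers $k,m,s$ with $q/3\ge k\ge m\ge s>0$ and $2k\le q-m$. Fix $A\subseteq\mathbb F_q$ with $|A|=k$, $B\subseteq A$ with $|B|=s$, and let $M=\mathbb F_q\setminus B$. For $d\in\mathbb N$, $\mathbb F_q[x]_{<d}$ denotes the polynomials of degree $<d$ (including $0$). The evaluation map $\phi_M:\mathbb F_q[x]\to\mathbb F_q^M$ is $P\mapsto(P(\alpha))_{\alpha\in M}$. Let $C_1=\phi_M(\mathbb F_q[x]_{<k})$, $C_2^\perp=\phi_M(\{P\in\mathbb F_q[x]_{<m}:P(b)=0\ \forall b\in B\})$, and $C_2=\{v\in\mathbb F_q^M:\sum_{\alpha\in M}v_\alpha w_\alpha=0\ \forall w\in C_2^\perp\}$; $C_1^\perp$ is defined analogously. For linear codes $C_2^\perp\subseteq C_1$ in $\mathbb F_q^M$, $\mathrm{CSS}(C_1,C_2)$ is the span of the states $\sum_{\alpha\in C_2^\perp}|c+\alpha\rangle$, $c\in C_1$, its dimension is $\dim C_1-\dim C_2^\perp$ and its distance is the minimum Hamming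 weight of $(C_1\setminus C_2^\perp)\cup(C_2\setminus C_1^\perp)$. *)

(* Defs.v *)
From mathcomp Require Import all_boot all_algebra all_field.
Set Implicit Arguments. Unset Strict Implicit. Unset Printing Implicit Defensive.
Import GRing.Theory.
Local Open Scope ring_scope.

Definition Mtype (F : finFieldType) (B : {set F}) : finType :=
  {x : F | x \in ~: B}.

Definition ambient (F : finFieldType) (B : {set F}) :=
  {ffun Mtype B -> F^o}.

Definition evalM (F : finFieldType) (B : {set F}) (P : {poly F}) : ambient B :=
  [ffun a : Mtype B => P.[val a]].

(* C1 = phi_M(F[x]_{<k}) ; {poly_k F} = polynomials of size <= k, i.e. degree < k
   (including 0).  The image of a linear map, as a subspace (its span). *)
Definition C1 (F : finFieldType) (B : {set F}) (k : nat) : {vspace ambient B} :=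
  <<[seq evalM B (val p) | p : {poly_k F}]>>%VS.

Definition C2perp (F : finFieldType) (B : {set F}) (m : nat) : {vspace ambient B} :=
  <<[seq evalM B (val p) | p in [pred p : {poly_m F} | [forall b in B, (val p).[b] == 0%R]]]>>%VS.

Definition dotM (F : finFieldType) (B : {set F}) (v w : ambient B) : F :=
  \sum_(a : Mtype B) v a * w a.

Definition dual (F : finFieldType) (B : {set F}) (C : {vspace ambient B}) :
  {set ambient B} :=
  [set v : ambient B | [forall w : ambient B, (w \in C) ==> (dotM v w == 0)]].

Definition wt (F : finFieldType) (B : {set F}) (v : ambient B) : nat :=
  #|[set a : Mtype B | v a != 0]|.

Definition css_length (F : finFieldType) (B : {set F}) : nat := #|Mtype B|.
Definition css_dim (F : finFieldType) (B : {set F})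
  (D1 D2perp : {vspace ambient B}) : nat := (\dim D1 - \dim D2perp)%N.
Definition css_dist_ge (F : finFieldType) (B : {set F})
  (D1 D2perp : {vspace ambient B}) (d : nat) : Prop :=
  forall v : ambient B,
    (v \in D1 /\ v \notin D2perp) \/ (v \in dual D2perp /\ v \notin dual D1) ->
    (d <= wt v)%N.

(* Main.v *)
From HB Require Import structures.
Require Import Defs.
From mathcomp Require Import all_boot all_algebra all_field zify.
Set Implicit Arguments. Unset Strict Implicit. Unset Printing Implicit Defensive.
Import GRing.Theory.
Local Open Scope ring_scope.

Section S.
Variables (F : finFieldType) (B : {set F}).

Definition fc (c : {poly F}) (n : nat) (Q : {poly_n F}) : ambient B :=
  evalM B (c * val Q).

Fact fc_lin c n : linear (@fc c n).
Proof.
move=> a p q; apply/ffunP => x; rewrite /fc !ffunE /=.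
by rewrite mulrDr hornerD -scalerAr hornerZ.
Qed.

HB.instance Definition _ c n := GRing.isLinear.Build _ _ _ _ (@fc c n) (@fc_lin c n).

Lemma card_M : #|Mtype B| = (#|F| - #|B|)%N.
Proof.
rewrite /Mtype card_sig -(cardsC B) addKn.
by apply: eq_card => x; rewrite !inE.
Qed.

Lemma roots_bound (p : {poly F}) : p != 0 ->
  (#|[set a : Mtype B | p.[val a] == 0%R]| < size p)%N.
Proof.
move=> p0; rewrite cardE -(size_map val); apply: max_poly_roots => //.
  by apply/allP => x /mapP [a]; rewrite mem_enum inE => h ->.
by rewrite map_inj_uniq ?enum_uniq //; exact: val_inj.
Qed.

Lemma wtE (v : ambient B) : (wt v + #|[set a | v a == 0%R]| = #|Mtype B|)%N.
Proof.
rewrite /wt.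
have -> : [set a | v a != 0] = ~: [set a | v a == 0] by apply/setP => a; rewrite !inE.
by rewrite addnC cardsC.
Qed.

Lemma fc_inj (c : {poly F}) n : c != 0 -> (size c + n <= #|Mtype B| + 1)%N -> injective (@fc c n).
Proof.
move=> c0 hs u v h.
apply/eqP; rewrite -subr_eq0; apply/eqP.
have hs2 := size_npoly (u - v).
apply: val_inj => /=.
apply/eqP; apply: contraT => nz.
have p0 : c * (val u - val v) != 0 by rewrite mulf_neq0.
have := roots_bound p0.
have -> : [set a : Mtype B | (c * (val u - val v)).[val a] == 0] = setT.
  apply/setP => a. rewrite !inE mulrDr mulrN hornerD hornerN subr_eq0.
  have := congr1 (fun w : ambient B => w a) h; rewrite /fc !ffunE; move=> ->; exact: eqxx.
move=> hlt; have e : #|[set: Mtype B]| = #|Mtype B| by rewrite cardsT. rewrite e in hlt.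
have hs3 : (size (val u - val v)%R <= n)%N := hs2.
have hm := size_mul_leq c (val u - val v).
have hc : (0 < size c)%N by rewrite size_poly_gt0.
move: hs3 hm hlt; set p := (val u - val v); set cp := (c * p)%R; lia.
Qed.

Lemma dim_fc (c : {poly F}) n : c != 0 -> (size c + n <= #|Mtype B| + 1)%N ->
  \dim (limg (linfun (@fc c n))) = n.
Proof.
move=> c0 hs; rewrite limg_dim_eq ?dim_polyn //.
have /lker0P : injective (linfun (@fc c n)).
  by move=> u v; rewrite !lfunE /=; apply: fc_inj.
by move/eqP ->; rewrite capv0.
Qed.

Lemma C1E k : C1 B k = limg (linfun (@fc 1 k)).
Proof.
apply/eqP; rewrite eqEsubv; apply/andP; split.
  apply/span_subvP => v /mapP [p _ ->].
  have -> : evalM B (val p) = linfun (@fc 1 k) p by rewrite lfunE /= /fc mul1r.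
  exact: memv_img (memvf p).
apply/subvP => v /memv_imgP [u _ ->]; rewrite lfunE /= /fc mul1r.
by apply: memv_span; apply: map_f; rewrite mem_enum.
Qed.

Definition gB : {poly F} := \prod_(b <- enum B) ('X - b%:P).

Lemma size_gB : size gB = (#|B|).+1.
Proof. by rewrite /gB size_prod_XsubC cardE. Qed.

Lemma gB0 : gB != 0.
Proof. by rewrite -size_poly_eq0 size_gB. Qed.

Lemma gB_root x : (gB.[x] == 0) = (x \in B).
Proof. by rewrite -[_ == 0]/(root gB x) root_prod_XsubC mem_enum. Qed.

Lemma C2E m : (#|B| <= m)%N -> C2perp B m = limg (linfun (@fc gB (m - #|B|))).
Proof.
move=> hm.
apply/eqP; rewrite eqEsubv; apply/andP; split.
  apply/span_subvP => v /imageP [p hp ->].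
  move: hp; rewrite inE => /forallP hp.
  have dv : gB %| val p.
    apply: uniq_roots_dvdp; last by rewrite uniq_rootsE enum_uniq.
    apply/allP => b; rewrite mem_enum => hb.
    by have := hp b; rewrite hb.
  have hQ : (size (val p %/ gB)%R <= m - #|B|)%N.
    rewrite size_divp ?gB0 // size_gB /=.
    exact: leq_sub2r (size_npoly p).
  have -> : evalM B (val p) = linfun (@fc gB (m - #|B|)) (@NPoly _ _ _ hQ).
    by rewrite lfunE /= /fc mulrC divpK.
  exact: memv_img (memvf _).
apply/subvP => v /memv_imgP [u _ ->]; rewrite lfunE /= /fc.
have hp : (size (gB * val u)%R <= m)%N.
  apply: leq_trans (size_mul_leq _ _) _.
  rewrite size_gB; have key : forall a, (a <= m - #|B|)%N -> (((#|B|).+1 + a).-1 <= m)%N by move=> a; lia.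
  exact: key (size_npoly u).
apply: memv_span.
have -> : evalM B (gB * val u) = evalM B (val (@NPoly _ _ _ hp)) by [].
apply: image_f; rewrite inE; apply/forallP => b; apply/implyP => hb.
by rewrite /= hornerM (eqP (_ : gB.[b] == 0)) ?mul0r // gB_root.
Qed.


Lemma dist1 k (v : ambient B) : v \in C1 B k -> v != 0 -> (#|Mtype B| < wt v + k)%N.
Proof.
rewrite C1E => /memv_imgP [u _ ->]; rewrite lfunE /= => nz.
have p0 : val u != 0.
  apply: contraNneq nz => h; apply/eqP/ffunP => a.
  by rewrite /fc !ffunE h mulr0 horner0.
have := roots_bound p0; have := wtE (fc 1 u).
have -> : [set a | fc 1 u a == 0%R] = [set a : Mtype B | (val u).[val a] == 0%R].
  by apply/setP => a; rewrite !inE /fc ffunE mul1r.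
have key : forall a b c, (a <= k)%N -> (wt (fc 1 u) + b = c)%N -> (b < a)%N -> (c < wt (fc 1 u) + k)%N.
  move=> a b c; lia.
move=> h1 h2; exact: key (size_npoly u) h1 h2.
Qed.

Lemma dist2 m (v : ambient B) : (#|B| <= m)%N -> v \in dual (C2perp B m) -> v != 0 ->
  (m - #|B| < wt v)%N.
Proof.
move=> hm hv nz; rewrite ltnNge; apply/negP => hw.
case: (pickP (fun a => v a != 0)) => [a0 ha0 | h0]; last first.
  by move/eqP: nz; apply; apply/ffunP => a; rewrite ffunE; move/negbFE/eqP: (h0 a).
set S := [set a | v a != 0].
have a0S : a0 \in S by rewrite inE.
set Q := \prod_(x <- map val (enum (S :\ a0))) ('X - x%:P).
have hQ : (size Q <= m - #|B|)%N.
  rewrite /Q size_prod_XsubC size_map -cardE.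
  move: hw; rewrite /wt -/S (cardsD1 a0 S) a0S; by [].
pose u := @NPoly _ (m - #|B|) Q hQ.
have hw' : fc gB u \in C2perp B m.
  by rewrite (C2E hm); have := memv_img (linfun (@fc gB (m - #|B|))) (memvf u); rewrite lfunE.
move: hv; rewrite inE => /forallP /(_ (fc gB u)) /implyP /(_ hw') /eqP.
rewrite /dotM (bigD1 a0) //= big1 ?addr0.
  rewrite /fc ffunE hornerM /= => /eqP; rewrite !mulf_eq0 (negPf ha0) /=.
  case/orP.
    by rewrite gB_root; have := valP a0; rewrite inE => /negPf ->.
  rewrite -[_ == 0]/(root _ _) root_prod_XsubC mem_map; last exact: val_inj.
  by rewrite mem_enum !inE eqxx.
move=> a ha; case: (eqVneq (v a) 0) => [->|va]; first by rewrite mul0r.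
rewrite /fc ffunE hornerM /=.
have : root Q (val a).
  by rewrite root_prod_XsubC mem_map ?mem_enum ?inE ?ha ?va //; exact: val_inj.
by move/eqP ->; rewrite !mulr0.
Qed.

End S.

Unset Implicit Arguments.

Theorem proposition5p6 (F : finFieldType) (l : nat) (k m s : nat)
  (A B : {set F}) :
  (2 <= l)%N -> #|F| = (2 ^ l)%N ->
  (3 * k <= 2 ^ l)%N -> (m <= k)%N -> (s <= m)%N -> (0 < s)%N ->
  (2 * k <= 2 ^ l - m)%N ->
  #|A| = k -> B \subset A -> #|B| = s ->
  [/\ (C2perp B m <= C1 B k)%VS,
      (\dim (C1 B k) - \dim (C2perp B m))%N = (k - m + s)%N &
      forall v : ambient B,
        (v \in C1 B k /\ v \notin C2perp B m) \/
        (v \in dual (C2perp B m) /\ v \notin dual (C1 B k)) ->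
        (minn (2 ^ l - k) m - s + 1 <= wt v)%N] /\
  [/\ css_length B = (2 ^ l - s)%N,
      css_dim (C1 B k) (C2perp B m) = (k - m + s)%N &
      css_dist_ge (C1 B k) (C2perp B m) (minn (2 ^ l - k) m - s + 1)].
Proof.
move=> hl hF h3k hmk hsm hs0 h2k hA hBA hB.
set q := (2 ^ l)%N in hF h3k h2k *.
have hM : #|Mtype B| = (q - s)%N by rewrite card_M hF hB.
have hBm : (#|B| <= m)%N by rewrite hB.
have dim1 : \dim (C1 B k) = k.
  rewrite C1E dim_fc ?oner_eq0 // size_poly1 hM; lia.
have dim2 : \dim (C2perp B m) = (m - s)%N.
  rewrite (C2E hBm) dim_fc ?gB0 ?hB // size_gB hB hM; lia.
have sub : (C2perp B m <= C1 B k)%VS.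
  rewrite (C2E hBm) C1E; apply/subvP => v /memv_imgP [u _ ->]; rewrite lfunE /=.
  have hp : (size (gB B * val u)%R <= k)%N.
    apply: leq_trans (size_mul_leq _ _) _.
    rewrite (size_gB B); have key : forall a, (a <= m - #|B|)%N -> (((#|B|).+1 + a).-1 <= k)%N by move=> a; lia.
    exact: key (size_npoly u).
  have -> : fc B (gB B) u = linfun (@fc _ B 1 k) (@NPoly _ k _ hp) by rewrite lfunE /= /fc mul1r.
  exact: memv_img (memvf _).
have dist : forall v : ambient B,
        (v \in C1 B k /\ v \notin C2perp B m) \/
        (v \in dual (C2perp B m) /\ v \notin dual (C1 B k)) ->
        (minn (q - k) m - s + 1 <= wt v)%N.
  move=> v [[h1 h2]|[h1 h2]].
    have nz : v != 0 by apply: contraNneq h2 => ->; exact: mem0v.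
    have := dist1 h1 nz; rewrite hM; lia.
  have nz : v != 0.
    apply: contraNneq h2 => ->; rewrite inE; apply/forallP => w; apply/implyP => _.
    by rewrite /dotM big1 // => a _; rewrite ffunE mul0r.
  have := dist2 hBm h1 nz; rewrite hB; lia.
split; split.
- exact: sub.
- by rewrite dim1 dim2; lia.
- exact: dist.
- by rewrite /css_length hM.
- by rewrite /css_dim dim1 dim2; lia.
- exact: dist.
Qed.
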